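(* For every constant $c_0>0$ there is a constant $K$ (depending only on $c_0$) such that the following holds. For any real symmetric positive definite matrix $M$, any matrix $Z$ with $M^{-1}\approx_{c_0}ZZ^\top$, and any $\epsilon>0$, there exists a linear operator $\tilde C$, given by a polynomial expression in $M$, $Z$ and $Z^\top$ of degree at most $K\max(1,\log(1/\epsilon))$, such that $\tilde C\tilde C^\top\approx_\epsilon M^{-1}$.
   Context: For symmetric $A,B$, $A\approx_\epsilon B$ means $e^{\epsilon}A\succeq B\succeq e^{-\epsilon}A$ in the Loewner order. *)

(* Defs.v *)
From HB Require Import structures.
From mathcomp Require Import all_boot all_order all_algebra.
From mathcomp Require Import all_classical all_reals all_analysis.
Set Implicit Arguments. Unset Strict Implicit. Unset Printing Implicit Defensive.
Import Order.TTheory GRing.Theory Num.Theory.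
Local Open Scope ring_scope.

Definition loewner_le (R : realType) (n : nat) (A B : 'M[R]_n) : Prop :=
  forall x : 'cV[R]_n, (x^T *m A *m x) 0 0 <= (x^T *m B *m x) 0 0.

Definition symmetric_mx (R : realType) (n : nat) (A : 'M[R]_n) : Prop :=
  A^T = A.

Definition posdef_mx (R : realType) (n : nat) (A : 'M[R]_n) : Prop :=
  symmetric_mx A /\ forall x : 'cV[R]_n, x != 0 -> 0 < (x^T *m A *m x) 0 0.

Definition approx_mx (R : realType) (n : nat) (eps : R) (A B : 'M[R]_n) : Prop :=
  loewner_le B (expR eps *: A) /\ loewner_le (expR (- eps) *: A) B.

(* Typed non-commutative polynomial expressions in the letters M (n x n),
   Z (n x m) and Z^T (m x n).  A side index [false] stands for dimension n,
   [true] for dimension m; [expr a b] denotes a (dim a) x (dim b) matrix. *)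
Inductive expr (R : realType) : bool -> bool -> Type :=
| EM : expr R false false
| EZ : expr R false true
| EZt : expr R true false
| EId : forall a, expr R a a
| EScale : forall a b, R -> expr R a b -> expr R a b
| EAdd : forall a b, expr R a b -> expr R a b -> expr R a b
| EMul : forall a b c, expr R a b -> expr R b c -> expr R a c.

(* Degree of an expression (an upper bound for the degree of the polynomial
   it denotes; every polynomial of degree <= d has such an expression). *)
Fixpoint expr_deg (R : realType) (a b : bool) (e : expr R a b) : nat :=
  match e with
  | EM => 1 | EZ => 1 | EZt => 1 | EId _ => 0
  | EScale _ _ _ e1 => expr_deg e1
  | EAdd _ _ e1 e2 => maxn (expr_deg e1) (expr_deg e2)
  | EMul _ _ _ e1 e2 => expr_deg e1 + expr_deg e2
  end%N.

Definition side_dim (n m : nat) (a : bool) : nat := if a then m else n.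

Fixpoint expr_eval (R : realType) (n m : nat) (M : 'M[R]_n) (Z : 'M[R]_(n, m))
    (a b : bool) (e : expr R a b) : 'M[R]_(side_dim n m a, side_dim n m b) :=
  match e in expr _ a b return 'M[R]_(side_dim n m a, side_dim n m b) with
  | EM => M
  | EZ => Z
  | EZt => Z^T
  | EId _ => 1%:M
  | EScale _ _ c e1 => c *: expr_eval M Z e1
  | EAdd _ _ e1 e2 => expr_eval M Z e1 + expr_eval M Z e2
  | EMul _ _ _ e1 e2 => expr_eval M Z e1 *m expr_eval M Z e2
  end.

(* Main.v *)
Require Import Defs.
From HB Require Import structures.
From mathcomp Require Import all_boot all_order all_algebra.
From mathcomp Require Import all_classical all_reals all_analysis.
From mathcomp Require Import ring lra zify.
Import Order.TTheory GRing.Theory Num.Theory.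
Local Open Scope ring_scope.

Section Scal.
Variable R : realType.

Fixpoint ak (k : nat) : R :=
  match k with 0 => 1 | k'.+1 => ak k' * ((k'.*2).+1)%:R / ((k'.*2).+2)%:R end.

Lemma ak_ge0 k : 0 <= ak k.
Proof. elim: k => [|k IH] /=; first exact: ler01.
by rewrite !mulr_ge0 ?invr_ge0 ?ler0n. Qed.

Lemma ak_decr k : ak k.+1 <= ak k.
Proof. rewrite /= -mulrA; apply: ler_piMr; first exact: ak_ge0.
by rewrite ler_pdivrMr ?ltr0n // mul1r ler_nat. Qed.

Lemma ak_rec k : (k.+1)%:R * ak k.+1 = (k%:R + 2^-1) * ak k.
Proof.
have e1 : ((k.*2).+1)%:R = 2 * k%:R + 1 :> R.
  by rewrite -mul2n -addn1 natrD natrM.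
have e2 : ((k.*2).+2)%:R = 2 * k%:R + 2 :> R.
  by rewrite -mul2n -addn2 natrD natrM.
have e3 : (k.+1)%:R = k%:R + 1 :> R by rewrite -addn1 natrD.
have hk : (2 * k%:R + 2) != 0 :> R by rewrite -e2 pnatr_eq0.
rewrite /= e1 e2 e3.
field. done.
Qed.

Definition Fk k := \sum_(j < k.+1) ak j * ak (k - j).
Definition Gk k := \sum_(j < k.+1) j%:R * (ak j * ak (k - j)).

Lemma Gk_sym k : 2 * Gk k = k%:R * Fk k.
Proof.
have : Gk k = \sum_(j < k.+1) (k - j)%:R * (ak j * ak (k - j)).
  rewrite /Gk (reindex_inj rev_ord_inj) /=; apply: eq_bigr => j _.
  rewrite subSS subKn; last by rewrite -ltnS.
  by rewrite [ak (k - j) * _]mulrC.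
move=> H; have -> : 2 * Gk k = Gk k + Gk k by ring.
rewrite {2}H /Gk -big_split /= /Fk mulr_sumr.
apply: eq_bigr => j _; rewrite -mulrDl -natrD subnKC //; exact: leq_ord j.
Qed.

Lemma Gk_rec k : Gk k.+1 = Gk k + Fk k / 2.
Proof.
rewrite /Gk big_ord_recl /= mul0r add0r.
rewrite /Fk mulr_suml -big_split /=; apply: eq_bigr => j _.
rewrite /bump /= add1n subSS -[j.+1]/(j.+1) mulrA ak_rec.
by field.
Qed.

Lemma Fk_rec k : Fk k.+1 = Fk k.
Proof.
have h1 : (k.+1)%:R * Fk k.+1 = (k.+1)%:R * Fk k.
  by rewrite -Gk_sym Gk_rec mulrDr Gk_sym -natr1; field.
have hk : (k.+1)%:R != 0 :> R by rewrite pnatr_eq0.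
exact: (mulfI hk h1).
Qed.

Lemma Fk1 k : Fk k = 1.
Proof. elim: k => [|k IH]; last by rewrite Fk_rec.
by rewrite /Fk big_ord1 /= mulr1. Qed.


Definition sp N : {poly R} := \poly_(i < N.+1) ak i.

Lemma sc_ge0 N k : 0 <= (sp N)`_k.
Proof. rewrite coef_poly; case: ifP => _ //; exact: ak_ge0. Qed.

Lemma sc_decr N k : (sp N)`_k.+1 <= (sp N)`_k.
Proof.
rewrite !coef_poly; case: ifP => h1.
  by rewrite (ltnW h1) ak_decr.
case: ifP => _ //; exact: ak_ge0.
Qed.

Definition cq N k := (sp N * sp N)`_k.

Lemma cq_low N k : (k <= N)%N -> cq N k = 1.
Proof.
move=> hk; rewrite /cq coefM -(Fk1 k) /Fk; apply: eq_bigr => j _.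
rewrite !coef_poly.
have hj : (j < N.+1)%N by apply: leq_ltn_trans (leq_ord j) _.
have hj2 : (k - j < N.+1)%N by rewrite ltnS (leq_trans (leq_subr _ _)).
by rewrite hj hj2.
Qed.

Lemma cq_ge0 N k : 0 <= cq N k.
Proof. rewrite /cq coefM; apply: sumr_ge0 => j _; apply: mulr_ge0; exact: sc_ge0. Qed.

Lemma cq_decr N k : (N <= k)%N -> cq N k.+1 <= cq N k.
Proof.
move=> hk; rewrite /cq !coefM big_ord_recr /=.
have -> : (sp N)`_k.+1 = 0 by rewrite coef_poly ltnNge ltnS hk.
rewrite mul0r addr0; apply: ler_sum => j _.
apply: ler_wpM2l; first exact: sc_ge0.
have -> : (k.+1 - j = (k - j).+1)%N by rewrite subSn // -ltnS.
exact: sc_decr.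
Qed.

Definition dp N : {poly R} := 1 - (1 - 'X) * (sp N * sp N).

Lemma dp_coef N k : (dp N)`_k = (k == 0)%:R - (cq N k - (if k == 0 then 0 else cq N k.-1)).
Proof. by rewrite /dp mulrBl mul1r !coefB coefXM coef1. Qed.

Lemma dp_ge0 N k : 0 <= (dp N)`_k.
Proof.
rewrite dp_coef; case: k => [|k] /=.
  by rewrite cq_low // subr0 subrr.
rewrite sub0r opprB subr_ge0.
case: (leqP N k) => h; first exact: cq_decr.
by rewrite !cq_low // ltnW.
Qed.

Lemma dp_val N t : 0 <= t <= 1 -> (dp N).[t] <= t ^+ N.+1.
Proof.
move=> /andP [t0 t1].
have e : (dp N).[t] = 1 - (1 - t) * (sp N * sp N).[t].
  by rewrite /dp !hornerE.
set q := sp N * sp N.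
have hq : \sum_(i < N.+1) t ^+ i <= q.[t].
  rewrite (@horner_coef_wide _ (N.+1 + size q)) ?leq_addl //.
  rewrite -(big_mkord xpredT (fun i => q`_i * t ^+ i)).
  rewrite (big_cat_nat _ (n := N.+1)) ?leq_addr //= big_mkord.
  rewrite -[X in X <= _]addr0; apply: lerD.
    apply: ler_sum => i _; by rewrite /q -/(cq N i) cq_low ?mul1r // -ltnS.
  apply: sumr_ge0 => i _; apply: mulr_ge0; [exact: cq_ge0 | exact: exprn_ge0].
rewrite e.
have h2 : (1 - t) * \sum_(i < N.+1) t ^+ i = 1 - t ^+ N.+1.
  by rewrite -[1 - t ^+ _]opprB subrX1 -mulNr opprB.
rewrite lerBlDr -lerBlDl -h2; apply: ler_wpM2l => //; by rewrite subr_ge0.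
Qed.


Section Mat.
Variables (n : nat) (G T : 'M[R]_n.+1).
Hypothesis hGsym : G^T = G.
Hypothesis hGT : G *m T = T^T *m G.

Definition Q (A : 'M[R]_n.+1) (y : 'cV[R]_n.+1) := (y^T *m G *m A *m y) 0 0.
Definition QP (p : {poly R}) y := Q (horner_mx T p) y.

Lemma Q_add A B y : Q (A + B) y = Q A y + Q B y.
Proof. by rewrite /Q mulmxDr mulmxDl mxE. Qed.
Lemma Q_scale c A y : Q (c *: A) y = c * Q A y.
Proof. by rewrite /Q -scalemxAr -scalemxAl mxE. Qed.
Lemma Q_0 y : Q 0 y = 0.
Proof. by rewrite /Q mulmx0 mul0mx mxE. Qed.

Lemma QP_add p q y : QP (p + q) y = QP p y + QP q y.
Proof. by rewrite /QP rmorphD Q_add. Qed.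
Lemma QP_scale c p y : QP (c *: p) y = c * QP p y.
Proof. by rewrite /QP linearZ Q_scale. Qed.
Lemma QP_opp p y : QP (- p) y = - QP p y.
Proof. by rewrite -scaleN1r QP_scale mulN1r. Qed.
Lemma QP_sub p q y : QP (p - q) y = QP p y - QP q y.
Proof. by rewrite QP_add QP_opp. Qed.
Lemma QP_0 y : QP 0 y = 0.
Proof. by rewrite /QP rmorph0 Q_0. Qed.
Lemma QP_sum I (r : seq I) (F : I -> {poly R}) y :
  QP (\sum_(i <- r) F i) y = \sum_(i <- r) QP (F i) y.
Proof. exact: (big_morph (fun p => QP p y) (fun p q => QP_add p q y) (QP_0 y)). Qed.

Lemma QP_C c y : QP c%:P y = c * QP 1 y.
Proof. by rewrite -alg_polyC QP_scale. Qed.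

Lemma Gpoly p : G *m horner_mx T p = (horner_mx T p)^T *m G.
Proof.
elim/poly_ind: p => [|p c IH].
  by rewrite rmorph0 mulmx0 trmx0 mul0mx.
rewrite rmorphD rmorphM /= horner_mx_X horner_mx_C -mulmxE.
set P := horner_mx T p.
have hc : comm_mx T P by apply: comm_mx_horner.
rewrite mulmxDr mulmxA IH -mulmxA hGT mulmxA -trmx_mul -hc trmx_mul.
rewrite linearD /= tr_scalar_mx mulmxDl mul_mx_scalar mul_scalar_mx.
by rewrite trmx_mul.
Qed.

Lemma QPcong p q y : QP q (horner_mx T p *m y) = QP (p * q * p) y.
Proof.
rewrite /QP /Q !rmorphM /= -!mulmxE trmx_mul.
rewrite -!mulmxA; congr (fun M => (y^T *m M) 0 0).
by rewrite !mulmxA -Gpoly.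
Qed.

Variable tau : R.
Hypothesis tau_gt0 : 0 < tau.
Hypothesis h1 : forall y, 0 <= QP 1 y.
Hypothesis hX0 : forall y, 0 <= QP 'X y.
Hypothesis hXt : forall y, QP 'X y <= tau * QP 1 y.

Lemma QP_Xtau y : 0 <= QP ('X * (tau%:P - 'X)) y.
Proof.
have e : tau *: ('X * (tau%:P - 'X)) =
  'X * (tau%:P - 'X) * 'X + (tau%:P - 'X) * 'X * (tau%:P - 'X).
  rewrite -mul_polyC; ring.
have : 0 <= QP (tau *: ('X * (tau%:P - 'X))) y.
  rewrite e QP_add -QPcong -QPcong; apply: addr_ge0.
    by rewrite QP_sub QP_C subr_ge0 hXt.
  exact: hX0.
rewrite QP_scale; by rewrite pmulr_rge0.
Qed.

Lemma Xdouble j : 'X^(j.*2) = 'X^j * 1 * 'X^j :> {poly R}.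
Proof. by rewrite mulr1 -addnn exprD. Qed.
Lemma Xdouble1 j (q : {poly R}) : 'X^(j.*2) * q = 'X^j * q * 'X^j.
Proof. by rewrite -addnn exprD mulrAC. Qed.

Lemma QPpow_ge0 k y : 0 <= QP ('X^k) y.
Proof.
rewrite -[k]odd_double_half; case: (odd k) => /=.
  rewrite add1n exprS mulrC Xdouble1 -QPcong; exact: hX0.
rewrite add0n Xdouble -QPcong; exact: h1.
Qed.

Lemma QPpow_step k y : QP ('X^(k.+1)) y <= tau * QP ('X^k) y.
Proof.
have e : 'X^k * (tau%:P - 'X) = tau *: 'X^k - 'X^(k.+1) :> {poly R}.
  by rewrite mulrBr exprSr -mul_polyC mulrC.
have : 0 <= QP ('X^k * (tau%:P - 'X)) y.
  rewrite -[k]odd_double_half; case: (odd k) => /=.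
    rewrite add1n exprS mulrAC mulrC Xdouble1 -QPcong; exact: QP_Xtau.
  rewrite add0n Xdouble1 -QPcong QP_sub QP_C subr_ge0; exact: hXt.
by rewrite e QP_sub QP_scale subr_ge0.
Qed.

Lemma QPpow_le k y : QP ('X^k) y <= tau ^+ k * QP 1 y.
Proof.
elim: k => [|k IH]; first by rewrite expr0 mul1r.
apply: le_trans (QPpow_step k y) _.
rewrite exprS -mulrA ler_wpM2l //; exact: ltW.
Qed.

Lemma QP_nonneg_poly (d : {poly R}) y : (forall i, 0 <= d`_i) ->
  0 <= QP d y <= d.[tau] * QP 1 y.
Proof.
move=> hd.
have e : QP d y = \sum_(i < size d) d`_i * QP ('X^i) y.
  rewrite -{1}(coefK d) poly_def QP_sum; apply: eq_bigr => i _; exact: QP_scale.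
rewrite e horner_coef mulr_suml; apply/andP; split.
  apply: sumr_ge0 => i _; apply: mulr_ge0 => //; exact: QPpow_ge0.
apply: ler_sum => i _; rewrite -mulrA ler_wpM2l //; exact: QPpow_le.
Qed.

End Mat.
End Scal.

Section Main.
Variable R : realType.

Definition Texpr (c : R) : expr R false false :=
  EAdd (EId R false) (EScale (- c) (EMul (EMul (EZ R) (EZt R)) (Defs.EM R))).

Fixpoint pexpr (c : R) (l : seq R) : expr R false false :=
  match l with
  | [::] => EScale 0 (EId R false)
  | a :: l' => EAdd (EScale a (EId R false)) (EMul (pexpr c l') (Texpr c))
  end.

Lemma pexpr_deg c l : (expr_deg (pexpr c l) <= 3 * size l)%N.
Proof. elim: l => [|a l IH] //=. rewrite max0n; lia. Qed.

Lemma pexpr_eval (n' m : nat) (M : 'M[R]_n'.+1) (Z : 'M[R]_(n'.+1, m)) c l :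
  expr_eval M Z (pexpr c l) = horner_mx (1%:M + (- c) *: (Z *m Z^T *m M)) (Poly l).
Proof.
elim: l => [|a l IH] /=; first by rewrite scale0r rmorph0.
rewrite IH cons_poly_def rmorphD rmorphM /= horner_mx_X horner_mx_C -mulmxE.
by rewrite scalemx1 addrC.
Qed.

Lemma qf_scale n (x : 'cV[R]_n) c (A : 'M[R]_n) :
  (x^T *m (c *: A) *m x) 0 0 = c * (x^T *m A *m x) 0 0.
Proof. by rewrite -scalemxAr -scalemxAl mxE. Qed.

End Main.
Require Import Defs.
From HB Require Import structures.
From mathcomp Require Import all_boot all_order all_algebra.
From mathcomp Require Import all_classical all_reals all_analysis.
From mathcomp Require Import ring lra zify.
Import Order.TTheory GRing.Theory Num.Theory.
Local Open Scope ring_scope.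

Lemma fin1 {R : realType} (e f dl t q d : R) : f <= 1 - dl -> t <= dl -> 0 <= dl ->
  e * f = 1 -> 0 < e -> 0 <= q -> 0 <= d <= t * q -> q <= e * (q - d).
Proof.
move=> h1 h2 h3 h4 h5 h6 /andP[h7 h8].
have hd : d <= dl * q by apply: le_trans h8 _; apply: ler_wpM2r.
have hfq : f * q <= q - d.
  have : f * q <= (1 - dl) * q by apply: ler_wpM2r.
  lra.
have : e * (f * q) <= e * (q - d) by apply: ler_wpM2l => //; exact: ltW.
by rewrite mulrA h4 mul1r.
Qed.

Lemma fin2 {R : realType} (f dl t q d : R) : f <= 1 - dl -> t <= dl -> 0 <= dl ->
  0 < f -> 0 <= q -> 0 <= d <= t * q -> f * (q - d) <= q.
Proof.
move=> h1 h2 h3 h4 h6 /andP[h7 h8].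
have hd : d <= dl * q by apply: le_trans h8 _; apply: ler_wpM2r.
have hdq : dl * q <= q by rewrite ler_piMl //; lra.
have : f * (q - d) <= 1 * (q - d) by apply: ler_wpM2r; lra.
lra.
Qed.

Theorem mainTheorem11 (R : realType) :
  forall c0 : R, 0 < c0 ->
  exists K : R,
  forall (n m : nat) (M : 'M[R]_n) (Z : 'M[R]_(n, m)),
    posdef_mx M ->
    approx_mx c0 (invmx M) (Z *m Z^T) ->
    forall eps : R, 0 < eps ->
    exists (b : bool) (C : expr R false b),
      ((expr_deg C)%:R <= K * Num.max 1 (ln (eps^-1)))
      /\ approx_mx eps (expr_eval M Z C *m (expr_eval M Z C)^T) (invmx M).
Proof.
move=> c0 hc0.
set b := expR c0.
set tau := 1 - expR (- c0) / b.
have hb : 0 < b := expR_gt0 _.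
have he : 0 < expR (- c0) := expR_gt0 _.
have htau0 : 0 < tau.
  rewrite subr_gt0 ltr_pdivrMr // mul1r.
  apply: lt_trans (_ : 1 < b); first by rewrite expR_lt1 oppr_lt0.
  by rewrite expR_gt1.
have htau1 : tau < 1 by rewrite ltrBlDr ltrDl divr_gt0.
set lam := - ln tau.
have hlam : 0 < lam by rewrite oppr_gt0 ln_lt0 // htau0 htau1.
exists (6 / lam + 4).
move=> n m M Z hM happ eps heps.
set mu := Num.max 1 (ln eps^-1).
have hmu1 : 1 <= mu by rewrite le_max lexx.
set N := Num.truncn (2 * mu / lam).
have hN : N%:R <= 2 * mu / lam < N.+1%:R.
  apply: truncn_itv; rewrite divr_ge0 ?(ltW hlam) //; lra.
exists true, (EScale (expR (- c0 / 2)) (EMul (pexpr R (b^-1) (sp R N)) (EZ R))).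
split.
  have h1 := pexpr_deg R (b^-1) (sp R N).
  have h2 := size_poly N.+1 (ak R).
  rewrite /=.
  have h3 : (expr_deg (pexpr R b^-1 (sp R N)) + 1 <= 3 * N + 4)%N.
    move: h1 h2; rewrite /sp; move: (expr_deg _) => d; move: (size _) => s; lia.
  apply: le_trans (_ : (3 * N + 4)%:R <= _); first by rewrite ler_nat.
  rewrite natrD natrM.
  have e : (6 / lam + 4) * mu = 3 * (2 * mu / lam) + 4 * mu.
    by field; rewrite gt_eqF.
  rewrite e; move: hN => /andP [hN1 _]; lra.
set dl := tau ^+ N.+1.
have hdl0 : 0 <= dl by rewrite exprn_ge0 // ltW.
have hfin : expR (- eps) <= 1 - dl.
  set del := expR (- mu).
  have hdl : dl <= del * del.
    rewrite /dl -{1}(lnK (_ : tau \in Num.pos)) ?posrE //.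
    rewrite -expRM_natl -expRD ler_expR.
    have : 2 * mu <= N.+1%:R * lam.
      move: hN => /andP [_ h]; rewrite -ler_pdivrMr //; exact: ltW.
    rewrite /lam; lra.
  have hdel1 : del <= 1 / 2.
    apply: le_trans (_ : expR (-1) <= _).
      by rewrite ler_expR lerN2.
    rewrite expRN div1r lef_pV2 ?posrE ?expR_gt0 //.
    have := expR_ge1Dx (1 : R); lra.
  have hdeleps : del <= eps.
    apply: le_trans (_ : expR (- ln eps^-1) <= _).
      by rewrite ler_expR lerN2 le_max lexx orbT.
    by rewrite expRN lnK ?posrE ?invr_gt0 // invrK.
  have hdel0 : 0 <= del := expR_ge0 _.
  have hm : expR (- eps) <= expR (- del) by rewrite ler_expR lerN2.
  have hg := expR_ge1Dx del.
  have hfg : expR (- del) * expR del = 1 by rewrite -expRD addNr expR0.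
  have hf0 : 0 < expR (- del) := expR_gt0 _.
  apply: le_trans hm _.
  nra.
case: n M Z hM happ => [|n'] M Z hM happ.
  by rewrite /approx_mx /loewner_le; split => x; rewrite !mxE !big_ord0.
have [hMsym hMpos] := hM.
have hMs : M^T = M := hMsym.
rewrite /= pexpr_eval polyseqK.
set W := Z *m Z^T.
set Tm := (1%:M + _ *: _).
set S := horner_mx Tm (sp R N).
set beta := expR (- c0 / 2).
have hGT : M *m Tm = Tm^T *m M.
    rewrite /Tm [(1%:M + _)^T]linearD /= tr_scalar_mx [(_ *: _)^T]linearZ /=.
  rewrite trmx_mul /W trmx_mul trmxK hMs.
  by rewrite mulmxDr mulmxDl mulmx1 mul1mx -scalemxAr -scalemxAl !mulmxA.
have hunit : M \in unitmx.
  rewrite unitmxE unitfE; apply/negP => /det0P [v hv0 hvM].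
  have := hMpos v^T; rewrite trmx_eq0 hv0 trmxK hvM mul0mx mxE => /(_ isT).
  by rewrite ltxx.
have hWM : W *m M = b *: (1%:M - Tm).
  rewrite /Tm opprD addrA subrr add0r scaleNr opprK scalerA mulfV ?gt_eqF //.
  by rewrite scale1r.
have Q1 : forall y, QP R n' M Tm 1 y = (y^T *m M *m y) 0 0.
  by move=> y; rewrite /QP /Q rmorph1 mulmx1.
have h1 : forall y, 0 <= QP R n' M Tm 1 y.
  move=> y; rewrite Q1; case: (eqVneq y 0) => [->|hy]; first by rewrite mulmx0 mxE.
  exact: ltW (hMpos y hy).
have QX : forall y, QP R n' M Tm 'X y =
    QP R n' M Tm 1 y - b^-1 * (y^T *m M *m W *m M *m y) 0 0.
  by move=> y; rewrite Q1 /QP horner_mx_X /Tm Q_add Q_scale /Q mulmx1 !mulmxA mulNr.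
have hx : forall x : 'cV[R]_n'.+1, x = M *m (invmx M *m x) := fun x => esym (mulKVmx hunit x).
have Qinv : forall y, ((M *m y)^T *m invmx M *m (M *m y)) 0 0 = QP R n' M Tm 1 y.
  by move=> y; rewrite Q1 trmx_mul hMs -!mulmxA (mulKmx hunit) !mulmxA.
have QW : forall y : 'cV[R]_n'.+1, ((M *m y)^T *m W *m (M *m y)) 0 0 = (y^T *m M *m W *m M *m y) 0 0.
  by move=> y; rewrite trmx_mul hMs !mulmxA.
case: happ => hup hlo.
have hbi : b * b^-1 = 1 by rewrite mulfV ?gt_eqF.
have hbi0 : 0 < b^-1 by rewrite invr_gt0.
have hX0 : forall y, 0 <= QP R n' M Tm 'X y.
  move=> y; have := hup (M *m y); rewrite qf_scale QW Qinv QX.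
  have := h1 y; rewrite -/b; nra.
have hXt : forall y, QP R n' M Tm 'X y <= tau * QP R n' M Tm 1 y.
  move=> y; have := hlo (M *m y); rewrite qf_scale QW Qinv QX /tau.
  have := h1 y; rewrite -/b; nra.
have hQd y := QP_nonneg_poly R n' M Tm hGT tau htau0 h1 hX0 hXt (dp R N) y (dp_ge0 R N).
have hdv : (dp R N).[tau] <= dl by apply: dp_val; rewrite (ltW htau0) (ltW htau1).
have QC : forall y, ((M *m y)^T *m ((beta *: (S *m Z)) *m (beta *: (S *m Z))^T) *m (M *m y)) 0 0
    = QP R n' M Tm 1 y - QP R n' M Tm (dp R N) y.
  move=> y.
  have e1 : (beta *: (S *m Z)) *m (beta *: (S *m Z))^T = (beta * beta) *: (S *m W *m S^T).
    by rewrite linearZ /= -scalemxAl -scalemxAr scalerA trmx_mul /W !mulmxA.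
  have hSM : S^T *m M = M *m S by rewrite (Gpoly R n' M Tm hGT).
  have e2 : M *m (S *m W *m S^T) *m M =
      b *: (M *m horner_mx Tm (sp R N * (1 - 'X) * sp R N)).
    clearbody W; rewrite -!mulmxA hSM (mulmxA W M S) hWM !rmorphM rmorphB rmorph1 /= horner_mx_X -!mulmxE.
    by rewrite -scalemxAl -!scalemxAr !mulmxA -/S rmorph1.
  have e3 : beta * beta * b = 1.
    have h0 : - c0 / 2 + - c0 / 2 + c0 = 0 by field.
    by rewrite /beta /b -!expRD h0 expR0.
  have e4 : sp R N * (1 - 'X) * sp R N = 1 - dp R N by rewrite /dp; ring.
  rewrite e1 qf_scale trmx_mul hMs.
  have -> : y^T *m M *m (S *m W *m S^T) *m (M *m y) =
      y^T *m (M *m (S *m W *m S^T) *m M) *m y by rewrite !mulmxA.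
  rewrite e2 qf_scale mulrA e3 mul1r e4 -QP_sub.
  by rewrite /QP /Q !mulmxA.
rewrite /approx_mx /loewner_le; split => x; rewrite (hx x);
  set y := invmx M *m x.
  rewrite qf_scale Qinv QC.
  apply: fin1. exact: hfin. exact: hdv. exact: hdl0. 2: exact: expR_gt0. 2: exact: h1. 2: exact: hQd.
  by rewrite -expRD addrN expR0.
rewrite qf_scale QC Qinv.
apply: fin2. exact: hfin. exact: hdv. exact: hdl0. exact: expR_gt0. exact: h1. exact: hQd.
Qed.
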